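(* Let $\beta \in \mathcal{P}$ and $\alpha \in E$ satisfy $\alpha^{q+1} = \beta^q + \beta^{q^2+q+1}$. If $\alpha \neq 0$, then $\alpha^{q^2-1}\beta^{q+1} = 1$.
   Context: Let $q = 2^m$ with $m \ge 1$, and let $E = \mathbb{F}_{q^4}$. Define $\mathcal{P} = \{x \in E \mid x^{q^3+q^2+q+1} = 1\}$. *)

(* Defs.v *)
From HB Require Import structures.
From mathcomp Require Import all_boot all_order all_algebra all_field.
Set Implicit Arguments. Unset Strict Implicit. Unset Printing Implicit Defensive.
Import GRing.Theory.
Local Open Scope ring_scope.

Definition Pset (E : finFieldType) (q : nat) : {set E} :=
  [set x : E | x ^+ (q ^ 3 + q ^ 2 + q + 1)%N == 1].

(* Main.v *)
Require Import Defs.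
From HB Require Import structures.
From mathcomp Require Import all_boot all_order all_algebra all_field.
From mathcomp Require Import zify.
Import GRing.Theory.
Local Open Scope ring_scope.

Theorem lemma2p2 (m : nat) (E : finFieldType) :
  (1 <= m)%N ->
  #|E| = ((2 ^ m) ^ 4)%N ->
  forall alpha beta : E,
    beta \in Pset E (2 ^ m) ->
    alpha ^+ (2 ^ m + 1) = beta ^+ (2 ^ m) + beta ^+ ((2 ^ m) ^ 2 + 2 ^ m + 1) ->
    alpha != 0 ->
    alpha ^+ ((2 ^ m) ^ 2 - 1) * beta ^+ (2 ^ m + 1) = 1.
Proof.
move=> m1 cardE alpha beta; rewrite inE => /eqP hN hA anz.
have h2 : (2%N \in [pchar E]).
  by apply: (card_finPcharP (n := (m * 4)%N)) => //; rewrite expnM.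
set q := (2 ^ m)%N in hN hA *.
have hq : [pchar E].-nat q.
  rewrite /q pnatX; apply/orP; left.
  by rewrite pnatE.
set A := alpha ^+ (q + 1) in hA.
have Anz : A != 0 by rewrite expf_neq0.
have q1 : (0 < q)%N by rewrite /q expn_gt0.
have eA : alpha ^+ (q ^ 2 - 1) = A ^+ (q - 1).
  rewrite /A -exprM; congr (_ ^+ _).
  by rewrite mulnC -{2}(exp1n 2) subn_sqr.
rewrite eA.
have key : A ^+ q * beta ^+ (q + 1) = A.
  rewrite {1}hA exprDn_pchar // -!exprM mulrDl -!exprD.
  have -> : (q * q + (q + 1) = q ^ 2 + q + 1)%N by rewrite !expnS expn0 !muln1; lia.
  have -> : ((q ^ 2 + q + 1) * q + (q + 1) = (q ^ 3 + q ^ 2 + q + 1) + q)%N.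
    rewrite !expnS expn0 !muln1; nia.
  by rewrite [beta ^+ (_ + q)]exprD hN mul1r addrC.
apply: (mulIf Anz); rewrite mul1r mulrAC -exprSr subn1 (prednK q1); exact: key.
Qed.
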